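(* Let $(X,d,\preccurlyeq)$ be a preordered $s$-regular $b$-metric space and let $\mathcal F=\{f_\alpha\}_{\alpha\in\mathcal I}$, $\mathcal G=\{g_\alpha\}_{\alpha\in\mathcal I}$ ($\mathcal I$ nonempty) be families of self mappings of $X$. Suppose that for each $\alpha\in\mathcal I$ there are mappings $H_{t,\alpha}:X\to X$, $0\le t\le n$, with $$f_\alpha=H_{0,\alpha}\preccurlyeq H_{1,\alpha}\succcurlyeq H_{2,\alpha}\preccurlyeq\cdots\succcurlyeq H_{n,\alpha}=g_\alpha,$$ and write $\mathcal H_t=\{H_{t,\alpha}\}_{\alpha\in\mathcal I}$. Suppose $x_0\in\mathrm{ComFix}(\mathcal F)$ and: (i) for each $t$, $1\le t\le n$, the family $\mathcal H_t$ is concordantly isotone; (ii) for each odd $t$, $1\le t\le n$, for every chain $C\in\mathcal C^*_1(\mathcal H_t,\preccurlyeq)$ there exists $w\in X$ which is a common upper bound of the chains $H_{t,\alpha}(C)$, $\alpha\in\mathcal I$, and there exist $z\in X$, $\beta\in\mathcal I$ such that for all $\alpha\in\mathcal I$ and $i\in\mathbb N$, $H_{t,\alpha}(w)\succcurlyeq w\succcurlyeq H^i_{t,\beta}(z)$, and $d(H^i_{t,\alpha}(w),H^i_{t,\beta}(z))\to0$ as $i\to\infty$; (iii) for each even $t$, $1\le t\le n$, for every chain $C\in\mathcal C_1(\mathcal H_t,\preccurlyeq)$ there exists $w'\in X$ which is a common lower bound of the chains $H_{t,\alpha}(C)$, $\alpha\in\mathcal I$, and there exist $z'\in X$, $\gamma\in\mathcal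 I$ such that for all $\alpha\in\mathcal I$ and $i\in\mathbb N$, $H_{t,\alpha}(w')\preccurlyeq w'\preccurlyeq H^i_{t,\gamma}(z')$, and $d(H^i_{t,\alpha}(w'),H^i_{t,\gamma}(z'))\to0$ as $i\to\infty$. Then there exists a fence $x_0\preccurlyeq x_1\succcurlyeq x_2\preccurlyeq\cdots\succcurlyeq x_n$ such that for each odd $t$, $x_t\in\mathrm{ComFix}(\mathcal H_t)\cap O^*_X(x_{t-1})$ and $x_t$ is a maximal element of that set, and for each even $t$, $x_t\in\mathrm{ComFix}(\mathcal H_t)\cap O_X(x_{t-1})$ and $x_t$ is a minimal element of that set.
   Context: A $b$-metric space with coefficient $s\ge 1$ is a nonempty set $X$ with $d:X\times X\to[0,\infty)$ such that for all $x,y,z$: $d(x,y)=0$ iff $x=y$; $d(x,y)=d(y,x)$; $d(x,y)\le s[d(x,z)+d(z,y)]$. A preorder is a reflexive transitive relation $\preccurlyeq$; $x\succcurlyeq y$ means $y\preccurlyeq x$; $x\prec y$ means $x\preccurlyeq y$ and $x\ne y$. A preordered $s$-regular $b$-metric space $(X,d,\preccurlyeq)$ is a $b$-metric space with coefficient $s$ with a preorder such that $x\preccurlyeq y\preccurlyeq z$ implies $\max\{d(x,y),d(y,z)\}\le s^2d(x,z)$. For maps $F,G$, $F\preccurlyeq G$ means $F(x)\preccurlyeq G(x)$ for all $x$. A chain is a subset any two elements of which are comparable. $f^i$ is the $i$-th iterate. A family $\{f_\alpha\}_{\alpha\in\mathcal I}$ of self maps is concordantly isotone if for all $x,y$, $x\prec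 y$ implies $f_\alpha(x)\preccurlyeq f_\beta(y)$ for all $\alpha,\beta\in\mathcal I$. $O_X(x_0)=\{x:x\preccurlyeq x_0\}$, $O^*_X(x_0)=\{x:x\succcurlyeq x_0\}$. For a family $\mathcal F=\{f_\alpha\}$: $\mathcal C_1(\mathcal F,\preccurlyeq)$ is the set of chains $C\subset\bigcup_\alpha f_\alpha(X)$ with $f_\alpha(x)\preccurlyeq x$ for all $x\in C,\alpha$, and $x\prec y$ in $C$ implies $x\preccurlyeq f_\alpha(y)$ for all $\alpha$; $\mathcal C^*_1(\mathcal F,\preccurlyeq)$ is the set of chains $C\subset\bigcup_\alpha f_\alpha(X)$ with $f_\alpha(x)\succcurlyeq x$ for all $x\in C,\alpha$, and $x\prec y$ in $C$ implies $f_\alpha(x)\preccurlyeq y$ for all $\alpha$. $\mathrm{ComFix}(\mathcal F)=\{x:f_\alpha(x)=x\ \forall\alpha\}$. A common upper (lower) bound of the sets $H_{t,\alpha}(C)$ is $w$ with $H_{t,\alpha}(x)\preccurlyeq w$ ($w\preccurlyeq H_{t,\alpha}(x)$) for all $x\in C$, $\alpha\in\mathcal I$. A minimal (maximal) element of $A$ is $w\in A$ with no $u\in A$ such that $u\prec w$ ($w\prec u$). *)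

(* Defs.v *)
From Stdlib Require Import Reals.
Open Scope R_scope.

Section Defs.
Context {X : Type}.

Definition b_metric (s : R) (d : X -> X -> R) : Prop :=
  1 <= s /\
  (forall x y, 0 <= d x y) /\
  (forall x y, d x y = 0 <-> x = y) /\
  (forall x y, d x y = d y x) /\
  (forall x y z, d x y <= s * (d x z + d z y)).

Definition preorder (le : X -> X -> Prop) : Prop :=
  (forall x, le x x) /\ (forall x y z, le x y -> le y z -> le x z).

Definition plt (le : X -> X -> Prop) (x y : X) : Prop := le x y /\ x <> y.

Definition preordered_s_regular_bmetric (s : R) (d : X -> X -> R)
  (le : X -> X -> Prop) : Prop :=
  b_metric s d /\ preorder le /\
  (forall x y z, le x y -> le y z -> Rmax (d x y) (d y z) <= s ^ 2 * d x z).

Fixpoint iterate (i : nat) (f : X -> X) (x : X) : X :=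
  match i with O => x | S j => f (iterate j f x) end.

Definition is_chain (le : X -> X -> Prop) (C : X -> Prop) : Prop :=
  forall x y, C x -> C y -> le x y \/ le y x.

Definition concordantly_isotone {I : Type} (le : X -> X -> Prop)
  (f : I -> X -> X) : Prop :=
  forall x y, plt le x y -> forall a b, le (f a x) (f b y).

Definition in_union_images {I : Type} (f : I -> X -> X) (x : X) : Prop :=
  exists a y, x = f a y.

Definition chainC1 {I : Type} (le : X -> X -> Prop) (f : I -> X -> X)
  (C : X -> Prop) : Prop :=
  is_chain le C /\ (forall x, C x -> in_union_images f x) /\
  (forall x a, C x -> le (f a x) x) /\
  (forall x y, C x -> C y -> plt le x y -> forall a, le x (f a y)).

Definition chainC1star {I : Type} (le : X -> X -> Prop) (f : I -> X -> X)
  (C : X -> Prop) : Prop :=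
  is_chain le C /\ (forall x, C x -> in_union_images f x) /\
  (forall x a, C x -> le x (f a x)) /\
  (forall x y, C x -> C y -> plt le x y -> forall a, le (f a x) y).

Definition ComFix {I : Type} (f : I -> X -> X) (x : X) : Prop :=
  forall a, f a x = x.

Definition O_X (le : X -> X -> Prop) (x0 x : X) : Prop := le x x0.
Definition O_X_star (le : X -> X -> Prop) (x0 x : X) : Prop := le x0 x.

Definition maximal_in (le : X -> X -> Prop) (A : X -> Prop) (w : X) : Prop :=
  A w /\ ~ (exists u, A u /\ plt le w u).
Definition minimal_in (le : X -> X -> Prop) (A : X -> Prop) (w : X) : Prop :=
  A w /\ ~ (exists u, A u /\ plt le u w).

End Defs.

(* Main.v *)
Require Import Defs.
From Stdlib Require Import Reals Lra Lia ProofIrrelevance Classical.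
From mathcomp Require classical_sets boolp.
Open Scope R_scope.

Section Step.
Context {X : Type} (s : R) (d : X -> X -> R) (le : X -> X -> Prop).
Hypothesis Hsp : preordered_s_regular_bmetric s d le.

Lemma le_refl' x : le x x.
Proof. destruct Hsp as [_ [[H1 _] _]]. apply H1. Qed.
Lemma le_trans' x y z : le x y -> le y z -> le x z.
Proof. destruct Hsp as [_ [[_ H1] _]]. apply H1. Qed.
Lemma d_zero x y : d x y = 0 -> x = y.
Proof. destruct Hsp as [[_ [_ [H1 _]]] _]. apply H1. Qed.
Lemma d_self x : d x x = 0.
Proof. destruct Hsp as [[_ [_ [H1 _]]] _]. apply H1; reflexivity. Qed.
Lemma d_nonneg x y : 0 <= d x y.
Proof. destruct Hsp as [[_ [H1 _]] _]. apply H1. Qed.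
Lemma d_sym x y : d x y = d y x.
Proof. destruct Hsp as [[_ [_ [_ [H1 _]]]] _]. apply H1. Qed.
Lemma s_ge1 : 1 <= s.
Proof. destruct Hsp as [[H1 _] _]. exact H1. Qed.
Lemma reg1 x y z : le x y -> le y z -> d x y <= s^2 * d x z.
Proof. intros. destruct Hsp as [_ [_ H1]]. eapply Rle_trans; [apply Rmax_l|]. apply H1; auto. Qed.
Lemma reg2 x y z : le x y -> le y z -> d y z <= s^2 * d x z.
Proof. intros. destruct Hsp as [_ [_ H1]]. eapply Rle_trans; [apply Rmax_r|]. apply H1; auto. Qed.
Lemma le_antisym' x y : le x y -> le y x -> x = y.
Proof.
  intros. apply d_zero. pose proof (reg1 x y x H H0). rewrite d_self in H1.
  pose proof (d_nonneg x y). nra.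
Qed.

Context {I : Type} (K : I -> X -> X).
Hypothesis Kiso : concordantly_isotone le K.

Lemma iso_weak x y a b : le x y -> x <> y -> le (K a x) (K b y).
Proof. intros. apply Kiso. split; auto. Qed.

Lemma iter_incr w a : le w (K a w) -> forall i,
  le (iterate i (K a) w) (iterate (S i) (K a) w).
Proof.
  intros Hw i. induction i as [|i IH]; simpl. exact Hw.
  simpl in IH. destruct (classic (iterate i (K a) w = K a (iterate i (K a) w))) as [E|E].
  - rewrite <- E; rewrite <- E. apply le_refl'.
  - apply iso_weak; auto.
Qed.

Lemma iter_ge w a : le w (K a w) -> forall i j, (i <= j)%nat ->
  le (iterate i (K a) w) (iterate j (K a) w).
Proof.
  intros Hw i j Hij. induction Hij. apply le_refl'.
  eapply le_trans'. exact IHHij. apply iter_incr; auto.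
Qed.

Lemma fix_from w z beta :
  (forall a i, le w (K a w) /\ le (iterate i (K beta) z) w) ->
  (forall a, Un_cv (fun i => d (iterate i (K a) w) (iterate i (K beta) z)) 0) ->
  ComFix K w.
Proof.
  intros Hb Hc a.
  assert (Hw : le w (K a w)) by apply (Hb a 0%nat).
  assert (key : forall i, (1 <= i)%nat ->
     d w (K a w) <= s^2 * (s^2 * d (iterate i (K a) w) (iterate i (K beta) z))).
  { intros i Hi.
    eapply Rle_trans.
    - apply (reg1 w (K a w) (iterate i (K a) w)); auto.
      apply (iter_ge w a Hw 1 i Hi).
    - pose proof s_ge1. apply Rmult_le_compat_l. nra.
      rewrite (d_sym (iterate i (K a) w)).
      apply (reg2 (iterate i (K beta) z) w (iterate i (K a) w)).
      apply (proj2 (Hb a i)). apply (iter_ge w a Hw 0 i). lia. }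
  symmetry. apply d_zero.
  destruct (Rle_lt_or_eq_dec 0 (d w (K a w)) (d_nonneg _ _)) as [Hp|Hp]; [|auto].
  exfalso. pose proof s_ge1.
  assert (Hs4 : 0 < s^2 * s^2) by (apply Rmult_lt_0_compat; nra).
  destruct (Hc a (d w (K a w) / (2 * (s^2 * s^2)))) as [N HN].
  { apply Rdiv_lt_0_compat; lra. }
  specialize (HN (S N) ltac:(lia)). specialize (key (S N) ltac:(lia)).
  unfold R_dist in HN. rewrite Rminus_0_r in HN.
  rewrite Rabs_right in HN by (apply Rle_ge, d_nonneg).
  set (D := d (iterate (S N) (K a) w) (iterate (S N) (K beta) z)) in *.
  set (e := d w (K a w)) in *.
  apply (Rmult_lt_compat_l (s^2*s^2)) in HN; [|lra].
  replace (s ^ 2 * s ^ 2 * (e / (2 * (s ^ 2 * s ^ 2)))) with (e/2) in HN by (field; lra).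
  rewrite <- Rmult_assoc in key. lra.
Qed.

Context {Hp : I -> X -> X} (p : X).
Hypothesis Hinh : inhabited I.
Hypothesis Hpfix : ComFix Hp p.
Hypothesis HpK : forall a x, le (Hp a x) (K a x).
Hypothesis Hub : forall C, chainC1star le K C ->
     exists w,
       (forall a x, C x -> le (K a x) w) /\
       exists z beta,
         (forall a i, le w (K a w) /\ le (iterate i (K beta) z) w) /\
         (forall a, Un_cv (fun i => d (iterate i (K a) w)
                                      (iterate i (K beta) z)) 0).

Lemma step_main : exists y, maximal_in le (fun y => ComFix K y /\ O_X_star le p y) y.
Proof.
  destruct Hinh as [a0].
  assert (F1 : forall a, le p (K a p)).
  { intro a. rewrite <- (Hpfix a) at 1. apply HpK. }
  set (c := K a0 p).
  assert (F2 : forall u, ComFix K u -> le p u -> le c u).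
  { intros u Hu Hpu. destruct (classic (p = u)) as [E|E].
    - subst c. rewrite E, Hu. apply le_refl'.
    - subst c. rewrite <- (Hu a0). apply iso_weak; auto. }
  assert (Fc : forall a, le c (K a c)).
  { intro a. destruct (classic (p = c)) as [E|E].
    - rewrite <- E at 2. rewrite <- E at 1. apply F1.
    - subst c. apply iso_weak; auto. }
  set (T := {y : X | ComFix K y /\ le p y}).
  set (Rl := fun (u v : T) => boolp.asbool (le (proj1_sig u) (proj1_sig v))).
  destruct (@classical_sets.Zorn T Rl) as [t Ht].
  - intro u. apply boolp.asboolT, le_refl'.
  - intros u v w H1 H2. apply boolp.asboolT. apply boolp.asboolW in H1, H2.
    eapply le_trans'; eauto.
  - intros [u pu] [v pv] H1 H2. apply boolp.asboolW in H1, H2. simpl in *.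
    pose proof (le_antisym' u v H1 H2). subst v. f_equal. apply proof_irrelevance.
  - intros A HA.
    set (C := fun x => x = c \/ exists u, A u /\ proj1_sig u = x).
    assert (HC : chainC1star le K C).
    { split; [|split; [|split]].
      - intros x y [Ex|[u [Au Ex]]] [Ey|[v [Av Ey]]]; subst x y.
        + left. apply le_refl'.
        + left. destruct v as [v [pu1 pu2]]. apply F2; auto.
        + right. destruct u as [u [pu1 pu2]]. apply F2; auto.
        + destruct (HA u v Au Av) as [H1|H1]; apply boolp.asboolW in H1; auto.
      - intros x [Ex|[u [Au Ex]]]; subst x.
        + exists a0, p. reflexivity.
        + exists a0, (proj1_sig u). destruct u as [u [pu1 pu2]]. simpl. symmetry. apply pu1.
      - intros x a [Ex|[u [Au Ex]]]; subst x.
        + apply Fc.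
        + destruct u as [u [pu1 pu2]]. simpl. rewrite pu1. apply le_refl'.
      - intros x y [Ex|[u [Au Ex]]] [Ey|[v [Av Ey]]] Hxy a; subst x y.
        + destruct Hxy; congruence.
        + destruct v as [v [pv1 pv2]]. simpl in *. rewrite <- (pv1 a). apply Kiso; auto.
        + destruct u as [u [pu1 pu2]]. simpl in *. rewrite pu1. apply Hxy.
        + destruct u as [u [pu1 pu2]]. simpl in *. rewrite pu1. apply Hxy. }
    destruct (Hub C HC) as [w [Hw [z [beta [Hb Hc]]]]].
    assert (Wfix : ComFix K w) by (eapply fix_from; eauto).
    assert (Wp : le p w).
    { eapply le_trans'. apply (F1 a0). fold c. eapply le_trans'. apply (Fc a0).
      apply Hw. left; reflexivity. }
    exists (exist _ w (conj Wfix Wp)). intros u Au. apply boolp.asboolT. simpl.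
    destruct u as [u [pu1 pu2]]. simpl. rewrite <- (pu1 a0). apply Hw.
    right. exists (exist _ u (conj pu1 pu2)). auto.
  - destruct t as [y [py1 py2]]. exists y. split. split; auto.
    intros [u [[Hu1 Hu2] [Hyu Hne]]].
    specialize (Ht (exist _ u (conj Hu1 Hu2)) (boolp.asboolT Hyu)).
    apply (f_equal (@proj1_sig _ _)) in Ht. simpl in Ht. congruence.
Qed.
End Step.

Lemma regular_flip {X : Type} s d (le : X -> X -> Prop) :
  preordered_s_regular_bmetric s d le ->
  preordered_s_regular_bmetric s d (fun x y => le y x).
Proof.
  intros Hs. pose proof Hs as [Hb [[Hr Ht] Hreg]]. split; [exact Hb|]. split.
  - split; [exact Hr|]. intros x y z H1 H2. eapply Ht; eauto.
  - intros x y z H1 H2. specialize (Hreg z y x H2 H1).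
    rewrite Rmax_comm, (d_sym s d le Hs x y), (d_sym s d le Hs y z), (d_sym s d le Hs x z).
    exact Hreg.
Qed.

Definition goalP {X I : Type} (le : X -> X -> Prop) (H : nat -> I -> X -> X)
  (x : nat -> X) (t : nat) : Prop :=
      (Nat.odd t = true ->
         le (x (pred t)) (x t) /\
         maximal_in le (fun y => ComFix (H t) y /\ O_X_star le (x (pred t)) y) (x t)) /\
      (Nat.even t = true ->
         le (x t) (x (pred t)) /\
         minimal_in le (fun y => ComFix (H t) y /\ O_X le (x (pred t)) y) (x t)).

Theorem theorem3p3 (X : Type) (s : R) (d : X -> X -> R) (le : X -> X -> Prop)
  (I : Type) (F G : I -> X -> X) (n : nat) (H : nat -> I -> X -> X) (x0 : X) :
  preordered_s_regular_bmetric s d le ->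
  inhabited I ->
  (* f_alpha = H_{0,alpha}, H_{n,alpha} = g_alpha *)
  (forall a, H 0%nat a = F a) ->
  (forall a, H n a = G a) ->
  (* the fence H_0 <= H_1 >= H_2 <= ... >= H_n *)
  (forall t a x, (t < n)%nat ->
     (Nat.even t = true -> le (H t a x) (H (S t) a x)) /\
     (Nat.odd t = true -> le (H (S t) a x) (H t a x))) ->
  ComFix F x0 ->
  (* (i) *)
  (forall t, (1 <= t <= n)%nat -> concordantly_isotone le (H t)) ->
  (* (ii) *)
  (forall t, (1 <= t <= n)%nat -> Nat.odd t = true ->
     forall C, chainC1star le (H t) C ->
     exists w,
       (forall a x, C x -> le (H t a x) w) /\
       exists z beta,
         (forall a i, le w (H t a w) /\ le (iterate i (H t beta) z) w) /\
         (forall a, Un_cv (fun i => d (iterate i (H t a) w)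
                                      (iterate i (H t beta) z)) 0)) ->
  (* (iii) *)
  (forall t, (1 <= t <= n)%nat -> Nat.even t = true ->
     forall C, chainC1 le (H t) C ->
     exists w',
       (forall a x, C x -> le w' (H t a x)) /\
       exists z' gamma,
         (forall a i, le (H t a w') w' /\ le w' (iterate i (H t gamma) z')) /\
         (forall a, Un_cv (fun i => d (iterate i (H t a) w')
                                      (iterate i (H t gamma) z')) 0)) ->
  exists x : nat -> X,
    x 0%nat = x0 /\
    forall t, (1 <= t <= n)%nat ->
      (Nat.odd t = true ->
         le (x (pred t)) (x t) /\
         maximal_in le (fun y => ComFix (H t) y /\ O_X_star le (x (pred t)) y) (x t)) /\
      (Nat.even t = true ->
         le (x t) (x (pred t)) /\
         minimal_in le (fun y => ComFix (H t) y /\ O_X le (x (pred t)) y) (x t)).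
Proof.
  intros Hsp Hinh HF HG Hfence Hx0 Hiso Hodd Heven.
  assert (Main : forall k, (k <= n)%nat -> exists x : nat -> X,
    x 0%nat = x0 /\ ComFix (H k) (x k) /\
    forall t, (1 <= t <= k)%nat -> goalP le H x t).
  { induction k as [|k IH]; intros Hk.
    - exists (fun _ => x0). split; [reflexivity|]. split.
      + intro a. rewrite HF. apply Hx0.
      + intros t Ht. lia.
    - destruct (IH ltac:(lia)) as [x [Hx0' [Hxk Hxt]]].
      assert (Hy : exists y, ComFix (H (S k)) y /\ goalP le H
                (fun t => if Nat.eqb t (S k) then y else x t) (S k)).
      { unfold goalP. simpl pred. rewrite Nat.eqb_refl.
        assert (Ekk : Nat.eqb k (S k) = false) by (apply Nat.eqb_neq; lia).
        rewrite Ekk.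
        destruct (Nat.even (S k)) eqn:Ev.
        + (* even step: use flipped order *)
          assert (Ok : Nat.odd k = true).
          { rewrite Nat.even_succ in Ev. exact Ev. }
          assert (Iso : concordantly_isotone (fun u v => le v u) (H (S k))).
          { intros a b Hab c e. apply (Hiso (S k) ltac:(lia)). destruct Hab; split; auto. }
          destruct (@step_main X s d (fun u v => le v u) (regular_flip s d le Hsp)
                     I (H (S k)) Iso (H k) (x k) Hinh Hxk) as [y [[Hy1 Hy2] Hy3]].
          * intros a z. apply (proj2 (Hfence k a z ltac:(lia))). exact Ok.
          * intros C [HC1 [HC2 [HC3 HC4]]].
            destruct (Heven (S k) ltac:(lia) Ev C) as [w [Hw1 [z [g [Hw2 Hw3]]]]].
            { split; [|split; [|split]].
              - intros u v Cu Cv. destruct (HC1 u v Cu Cv); auto.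
              - exact HC2.
              - exact HC3.
              - intros u v Cu Cv [Huv Hne] a. apply (HC4 v u Cv Cu). split; auto. }
            exists w. split; [exact Hw1|]. exists z, g. split; [exact Hw2|exact Hw3].
          * exists y. split; [exact Hy1|]. split.
            -- intro Od. exfalso. unfold Nat.odd in Od. rewrite Ev in Od. discriminate.
            -- intros _. split; [exact Hy2|]. split; [split; auto|].
               intros [u [Hu [Hu1 Hu2]]]. apply Hy3. exists u. split; [exact Hu|].
               split; auto.
        + assert (Ek : Nat.even k = true).
          { rewrite Nat.even_succ in Ev. unfold Nat.odd in Ev.
            destruct (Nat.even k); auto. }
          destruct (@step_main X s d le Hsp
                     I (H (S k)) (Hiso (S k) ltac:(lia)) (H k) (x k) Hinh Hxk) as [y [[Hy1 Hy2] Hy3]].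
          * intros a z. apply (proj1 (Hfence k a z ltac:(lia))). exact Ek.
          * exact (Hodd (S k) ltac:(lia) ltac:(unfold Nat.odd; rewrite Ev; reflexivity)).
          * exists y. split; [exact Hy1|]. split.
            -- intros _. split; [exact Hy2|]. split; [split; auto|exact Hy3].
            -- intro E. discriminate. }
      destruct Hy as [y [Hy1 Hy2]].
      exists (fun t => if Nat.eqb t (S k) then y else x t). split; [|split].
      + simpl. exact Hx0'.
      + rewrite Nat.eqb_refl. exact Hy1.
      + intros t Ht. destruct (Nat.eq_dec t (S k)) as [->|Hne]; [exact Hy2|].
        specialize (Hxt t ltac:(lia)). unfold goalP in *.
        assert (E1 : Nat.eqb t (S k) = false) by (apply Nat.eqb_neq; lia).
        assert (E2 : Nat.eqb (pred t) (S k) = false) by (apply Nat.eqb_neq; lia).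
        rewrite E1, E2. exact Hxt. }
  destruct (Main n (le_n n)) as [x [Hx1 [_ Hx2]]].
  exists x. split; [exact Hx1|]. exact Hx2.
Qed.
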